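(* Assume $f$ is twice continuously differentiable on $(0,\infty)$. Define $S$ on probability vectors $q$ on $\hat{\mathcal X}$ implicitly by $$S[q](i)=q(i)\sum_x\frac{p(x)A_q(x,i)}{\sum_kq(k)A_q(x,k)},\qquad A_q(x,i)=\exp\{-s_1d(x,i)-s_2g(p,S[q],i)\},$$ with $g(p,r,i)=f\big(\tfrac{p(i)}{r(i)}\big)-\tfrac{p(i)}{r(i)}f'\big(\tfrac{p(i)}{r(i)}\big)$. Let $q^*$ be a fixed point of $S$ achieving the RDPF, and let $A=A_{q^*}$. Let $J(q^* )$ be the Jacobian matrix of $S$ at $q^*$, with entries $J_{ij}=\partial S[q](i)/\partial q(j)$. Then $$J(q^* )=(I-M)(I-\Gamma J(q^* )),$$ where $$M_{ij}=q^*(i)\sum_xp(x)\frac{A(x,i)A(x,j)}{\big(\sum_kq^*(k)A(x,k)\big)^2},\qquad \Gamma=s_2\,\mathrm{diag}\Big[q^*(i)\frac{\partial^2}{\partial q(i)^2}D_f(p\|q)\Big|_{q=q^*}\Big]_i.$$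
   Context: Finite alphabets $\mathcal X=\hat{\mathcal X}$. The source distribution is $p$, $d\ge0$ is a distortion, and $s_1,s_2\ge0$ are multipliers. $f:(0,\infty)\to\mathbb R$ is convex with $f(1)=0$, and $D_f(p\|q)=\sum_xq(x)f(p(x)/q(x))$. $S$ is the update map of the exact alternating minimization iteration $q^{(n+1)}=S[q^{(n)}]$ for the rate-distortion-perception problem $\min_QI(p,Q)$ subject to $\mathbb E[d]\le D$ and $D_f(p\|q_Q)\le P$. *)

(* Defs.v *)
(* R : realType, alphabet X = Xhat = 'I_n. *)
From HB Require Import structures.
From mathcomp Require Import all_boot all_order all_algebra.
From mathcomp Require Import all_classical all_reals all_analysis.
Set Implicit Arguments. Unset Strict Implicit. Unset Printing Implicit Defensive.
Import Order.TTheory GRing.Theory Num.Theory.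
Local Open Scope ring_scope.

Section Defs.
Variables (R : realType) (n : nat).
Implicit Types (p q r : 'I_n -> R).

Definition Df (f : R -> R) p q : R := \sum_(x < n) q x * f (p x / q x).

Definition gfun (f : R -> R) p r (i : 'I_n) : R :=
  f (p i / r i) - p i / r i * (derive1 f) (p i / r i).

(* A(x,i) = exp(-s1 d(x,i) - s2 g(p,r,i)), where r = S[q] *)
Definition Afun (s1 s2 : R) (d : 'I_n -> 'I_n -> R) (f : R -> R) p r
  (x i : 'I_n) : R := expR (- s1 * d x i - s2 * gfun f p r i).

Definition upd q (j : 'I_n) (t : R) : 'I_n -> R :=
  fun k => if k == j then t else q k.

Definition pderivable (F : ('I_n -> R) -> R) q (j : 'I_n) : Prop :=
  derivable (fun t => F (upd q j t)) (q j) 1.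
Definition pderiv (F : ('I_n -> R) -> R) q (j : 'I_n) : R :=
  derive1 (fun t => F (upd q j t)) (q j).
Definition pderiv2 (F : ('I_n -> R) -> R) q (i : 'I_n) : R :=
  derive1 (derive1 (fun t => F (upd q i t))) (q i).

Definition jacobianS (S : ('I_n -> R) -> ('I_n -> R)) q : 'M[R]_n :=
  \matrix_(i, j) pderiv (fun r => S r i) q j.

Definition Mmat (A : 'I_n -> 'I_n -> R) p q : 'M[R]_n :=
  \matrix_(i, j) (q i * \sum_(x < n) p x * (A x i * A x j)
                        / (\sum_(k < n) q k * A x k) ^+ 2).

Definition Gammat (s2 : R) (f : R -> R) p q : 'M[R]_n :=
  s2 *: diag_mx (\row_i (q i * pderiv2 (Df f p) q i)).

End Defs.

(* Main.v *)
Require Import Defs.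
From HB Require Import structures.
From mathcomp Require Import all_boot all_order all_algebra.
From mathcomp Require Import all_classical all_reals all_analysis.
From mathcomp Require Import ring lra.
Import Order.TTheory GRing.Theory Num.Theory.
Import numFieldNormedType.Exports.
Local Open Scope classical_set_scope.
Local Open Scope ring_scope.
Set Implicit Arguments. Unset Strict Implicit.

Section Helpers.
Variable R : realType.
Implicit Types (f g : R -> R) (x a b : R).

Lemma isd_eq f x a b : is_derive x (1:R) f a -> a = b -> is_derive x (1:R) f b.
Proof. by move=> ? <-. Qed.
Lemma isd_der f x : derivable f x 1 -> is_derive x (1:R) f (derive1 f x).
Proof. by move=> /derivableP; rewrite derive1E. Qed.
Lemma isd_val f x a : is_derive x (1:R) f a -> derive1 f x = a.
Proof. by move=> H; rewrite derive1E; apply: derive_val. Qed.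
Lemma isd_cst (c : R) x : is_derive x (1:R) (fun _ : R => c) 0.
Proof. exact: is_derive_cst. Qed.
Lemma isd_id x : is_derive x (1:R) (fun t : R => t) 1.
Proof. exact: is_derive_id. Qed.
Lemma isdD f g x a b : is_derive x (1:R) f a -> is_derive x (1:R) g b ->
  is_derive x (1:R) (fun t => f t + g t) (a + b).
Proof. move=> ? ?; exact: is_deriveD. Qed.
Lemma isdB f g x a b : is_derive x (1:R) f a -> is_derive x (1:R) g b ->
  is_derive x (1:R) (fun t => f t - g t) (a - b).
Proof. move=> ? ?; exact: is_deriveB. Qed.
Lemma isdM f g x a b : is_derive x (1:R) f a -> is_derive x (1:R) g b ->
  is_derive x (1:R) (fun t => f t * g t) (f x * b + g x * a).
Proof. move=> ? ?; exact: is_deriveM. Qed.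
Lemma isdV f x a : f x != 0 -> is_derive x (1:R) f a ->
  is_derive x (1:R) (fun t => (f t)^-1) (- (f x)^-2 * a).
Proof. move=> ? ?; exact: is_deriveV. Qed.
Lemma isd_comp f g x a b : is_derive (g x) (1:R) f a -> is_derive x (1:R) g b ->
  is_derive x (1:R) (fun t => f (g t)) (a * b).
Proof. move=> ? ?; exact: is_derive1_comp. Qed.
Lemma isd_exp f x a : is_derive x (1:R) f a ->
  is_derive x (1:R) (fun t => expR (f t)) (expR (f x) * a).
Proof. move=> ?; apply: isd_comp => //; exact: is_derive_expR. Qed.
Lemma isd_sum n (h : 'I_n -> R -> R) x (dh : 'I_n -> R) :
  (forall i, is_derive x (1:R) (h i) (dh i)) ->
  is_derive x (1:R) (fun t => \sum_(i < n) h i t) (\sum_(i < n) dh i).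
Proof.
move=> H; have -> : (fun t => \sum_(i < n) h i t) = \sum_(i < n) h i.
  by apply/funext => t; rewrite fct_sumE.
exact: is_derive_sum.
Qed.

Section HF.
Variables (f : R -> R).
Hypothesis df1 : forall t : R, 0 < t -> derivable f t 1.
Hypothesis df2 : forall t : R, 0 < t -> derivable (derive1 f) t 1.

Definition Hf (u : R) := f u - u * derive1 f u.

Lemma isd_H (u : R) : 0 < u -> is_derive u (1:R) Hf (- (u * derive1 (derive1 f) u)).
Proof.
move=> u0; rewrite /Hf.
apply: isd_eq (isdB (isd_der (df1 u0)) (isdM (isd_id u) (isd_der (df2 u0)))) _.
by rewrite mulr1; ring.
Qed.

Lemma isd_gH (rho : R -> R) (x r' a : R) : 0 < a -> 0 < rho x ->
  is_derive x (1:R) rho r' ->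
  is_derive x (1:R) (fun t => Hf (a / rho t))
    (a ^+ 2 / rho x ^+ 3 * derive1 (derive1 f) (a / rho x) * r').
Proof.
move=> a0 r0 dr.
have rn0 : rho x != 0 by rewrite gt_eqF.
have h1 := isdM (isd_cst a x) (isdV rn0 dr).
have h2 := isd_H (divr_gt0 a0 r0).
have h3 := isd_comp (f:=Hf) (g:=fun t => a / rho t) h2 h1. eapply isd_eq; [exact h3|].
by field.
Qed.

Lemma isd_Df n (p q : 'I_n -> R) (i : 'I_n) (t : R) : 0 < p i -> 0 < t ->
  is_derive t (1:R) (fun s => Df f p (upd q i s)) (Hf (p i / t)).
Proof.
move=> p0 t0; rewrite /Df.
have hx : forall x : 'I_n, is_derive t (1:R)
    (fun s => upd q i s x * f (p x / upd q i s x))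
    (if x == i then Hf (p i / t) else 0).
  move=> x /=; rewrite /upd; case: eqP => [->|_]; last exact: isd_cst.
  have tn0 : t != 0 by rewrite gt_eqF.
  have h1 := isdM (isd_cst (p i) t) (isdV tn0 (isd_id t)).
  have h2 := isd_comp (f:=f) (g:=fun s => p i / s) (isd_der (df1 (divr_gt0 p0 t0))) h1.
  have h3 := isdM (isd_id t) h2.
  eapply isd_eq; [exact h3|].
  by rewrite /Hf; field.
have hs := isd_sum hx.
eapply isd_eq; [exact hs|].
rewrite (bigD1 i) //= eqxx big1 ?addr0 // => x /negbTE ->.
by [].
Qed.

Lemma pderiv2_Df n (p q : 'I_n -> R) (i : 'I_n) : 0 < p i -> 0 < q i ->
  pderiv2 (Df f p) q i = p i ^+ 2 / q i ^+ 3 * derive1 (derive1 f) (p i / q i).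
Proof.
move=> p0 q0; rewrite /pderiv2.
have E : \forall t \near q i,
    derive1 (fun s => Df f p (upd q i s)) t = Hf (p i / t).
  near=> t; apply: isd_val; apply: isd_Df => //.
  near: t; exact: lt_nbhsr.
rewrite derive1E (near_eq_derive _ E) -derive1E.
apply: isd_val.
have h := isd_gH (rho := fun t => t) p0 q0 (isd_id (q i)).
by rewrite mulr1 in h.
Unshelve. all: by end_near.
Qed.
End HF.
End Helpers.

Lemma sum_dl (R : realType) n (i : 'I_n) (F : 'I_n -> R) :
  \sum_l (i == l)%:R * F l = F i.
Proof.
rewrite (bigD1 i) //= eqxx mul1r big1 ?addr0 // => l /negbTE.
by rewrite eq_sym => ->; rewrite mul0r.
Qed.

Lemma sum_dr (R : realType) n (k : 'I_n) (F : 'I_n -> R) :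
  \sum_l F l * (l == k)%:R = F k.
Proof.
rewrite (bigD1 k) //= eqxx mulr1 big1 ?addr0 // => l /negbTE ->.
by rewrite mulr0.
Qed.

Lemma final_alg (R : realType) n (qs p c J : 'I_n -> R) (a : 'I_n -> 'I_n -> R)
    (Z : 'I_n -> R) (s2 : R) (i j : 'I_n) :
  (forall x, Z x != 0) ->
  \sum_x p x * a x i / Z x = 1 ->
  qs i * \sum_x (p x * a x i * (- (Z x) ^- 2 *
      \sum_k (qs k * (a x k * (- s2 * (c k * J k))) + a x k * (k == j)%:R))
     + (Z x)^-1 * (p x * (a x i * (- s2 * (c i * J i))) + a x i * 0))
  + (\sum_x p x * a x i / Z x) * (i == j)%:R
  = \sum_l ((i == l)%:R - qs i * \sum_x p x * (a x i * a x l) / Z x ^+ 2)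
       * ((l == j)%:R - s2 * (qs l * c l * J l)).
Proof.
move=> Zn0 fix1; rewrite fix1 mul1r.
set G := fun l => s2 * (qs l * c l * J l).
have E1 : forall x, \sum_k (qs k * (a x k * (- s2 * (c k * J k))) + a x k * (k == j)%:R)
    = a x j - \sum_l a x l * G l.
  move=> x; rewrite big_split /= sum_dr addrC; congr (_ + _).
  by rewrite -sumrN; apply: eq_bigr => l _; rewrite /G; ring.
under eq_bigr => x _ do rewrite E1.
symmetry.
rewrite [LHS](eq_bigr _ (fun l _ => mulrBl _ _ _)) sumrB sum_dl.
rewrite [X in _ - X](eq_bigr _ (fun l _ => mulrBr _ _ _)) sumrB sum_dr.
symmetry.
have E2 : \sum_l (qs i * \sum_x p x * (a x i * a x l) / Z x ^+ 2) * G l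
    = qs i * \sum_x (p x * a x i / Z x ^+ 2 * \sum_l a x l * G l).
  under eq_bigr => l _ do rewrite -mulrA mulr_suml.
  rewrite -mulr_sumr; congr (_ * _); rewrite exchange_big /=.
  apply: eq_bigr => x _; rewrite mulr_sumr; apply: eq_bigr => l _; ring.
have E3 : s2 * (qs i * c i * J i) = qs i * \sum_x (p x * a x i / Z x * (s2 * (c i * J i))).
  by rewrite -mulr_suml fix1 /G; ring.
rewrite E2 E3.
set T := (X in qs i * X + _).
have -> : T = \sum_x (p x * a x i / Z x ^+ 2 * \sum_l a x l * G l)
   - \sum_x (p x * a x i / Z x * (s2 * (c i * J i)))
   - \sum_x p x * (a x i * a x j) / Z x ^+ 2.
  rewrite -!sumrB; apply: eq_bigr => x _.
  by field; rewrite Zn0.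
ring.
Qed.

Theorem theorem5 (R : realType) (n : nat)
  (p : 'I_n -> R) (d : 'I_n -> 'I_n -> R) (s1 s2 : R) (f : R -> R)
  (S : ('I_n -> R) -> ('I_n -> R)) (qs : 'I_n -> R) :
  (* source distribution, with full support *)
  (forall x, 0 < p x) -> \sum_(x < n) p x = 1 ->
  (forall x y, 0 <= d x y) -> 0 <= s1 -> 0 <= s2 ->
  (* f convex on (0,oo), f(1) = 0, f twice continuously differentiable *)
  (forall a b t : R, 0 < a -> 0 < b -> 0 <= t <= 1 ->
     f (t * a + (1 - t) * b) <= t * f a + (1 - t) * f b) ->
  f 1 = 0 ->
  (forall t : R, 0 < t -> derivable f t 1) ->
  (forall t : R, 0 < t -> derivable (derive1 f) t 1) ->
  (forall t : R, 0 < t -> (derive1 (derive1 f) x @[x --> t] --> derive1 (derive1 f) t)) ->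
  (* q* is a probability vector with full support *)
  (forall i, 0 < qs i) -> \sum_(i < n) qs i = 1 ->
  (* S is (implicitly) defined by the update equation near q* *)
  (exists2 e : R, 0 < e & forall q : 'I_n -> R,
     (forall k, `|q k - qs k| < e) ->
     (forall i, 0 < S q i) /\
     (forall i, S q i = q i * \sum_(x < n)
         p x * Afun s1 s2 d f p (S q) x i
           / \sum_(k < n) q k * Afun s1 s2 d f p (S q) x k)) ->
  (* q* is a fixed point of S *)
  S qs = qs ->
  (* the Jacobian of S at q* exists *)
  (forall i j, pderivable (fun r => S r i) qs j) ->
  jacobianS S qs =
    (1%:M - Mmat (Afun s1 s2 d f p (S qs)) p qs)
      *m (1%:M - Gammat s2 f p qs *m jacobianS S qs).
Proof.
move=> p0 psum d0 s10 s20 fconv f1 df1 df2 f2c qs0 qssum [e e0 He] Sfix Jder.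
rewrite /Gammat -scalemxAl mul_diag_mx Sfix.
apply/matrixP => i j; rewrite !mxE.
under eq_bigr => l _ do rewrite !mxE.
under eq_bigr => l _ do rewrite (pderiv2_Df df1 df2 (p0 l) (qs0 l)).
pose a := fun x k => Afun s1 s2 d f p qs x k.
pose c := fun k => p k ^+ 2 / qs k ^+ 3 * derive1 (derive1 f) (p k / qs k).
pose J := fun k => pderiv (S^~ k) qs j.
pose Z := fun x => \sum_(k < n) qs k * a x k.
have apos : forall x k, 0 < a x k by move=> x k; rewrite /a /Afun expR_gt0.
have Zne : forall x, Z x != 0.
  move=> x; rewrite gt_eqF // /Z (bigD1 x) //=.
  have h1 : 0 < qs x * a x x by rewrite mulr_gt0.
  have h2 : 0 <= \sum_(k < n | k != x) qs k * a x k.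
    by apply: sumr_ge0 => k _; rewrite mulr_ge0 // ltW.
  lra.
have fix1 : \sum_x p x * a x i / Z x = 1.
  have hb : forall k, `|qs k - qs k| < e by move=> k; rewrite subrr normr0.
  have [_ /(_ i)] := He qs hb.
  rewrite Sfix => h.
  apply: (mulfI (negbT (gt_eqF (qs0 i)))); rewrite mulr1; symmetry; exact: h.
have U : upd qs j (qs j) = qs.
  by apply/funext => k; rewrite /upd; case: eqP => // ->.
have hr : forall k, is_derive (qs j) (1:R) (fun t => S (upd qs j t) k) (J k).
  by move=> k; exact: (isd_der (Jder k j)).
have hS0 : forall k, S (upd qs j (qs j)) k = qs k by move=> k; rewrite U Sfix.
have hg : forall k, is_derive (qs j) (1:R) (fun t => gfun f p (S (upd qs j t)) k) (c k * J k).
  move=> k.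
  have r0 : 0 < (fun t => S (upd qs j t) k) (qs j) by rewrite /= hS0.
  have h := isd_gH df1 df2 (p0 k) r0 (hr k).
  eapply isd_eq; [exact h|].
  by rewrite /= hS0.
have hA : forall x k, is_derive (qs j) (1:R)
    (fun t => Afun s1 s2 d f p (S (upd qs j t)) x k) (a x k * (- s2 * (c k * J k))).
  move=> x k.
  have h := isd_exp (isdB (isd_cst (- s1 * d x k) (qs j)) (isdM (isd_cst s2 (qs j)) (hg k))).
  eapply isd_eq; [exact h|].
  rewrite /= U Sfix /a /Afun; ring.
have hq : forall k, is_derive (qs j) (1:R) (fun t => upd qs j t k) (k == j)%:R.
  move=> k; have [ekj|nkj] := eqVneq k j.
    rewrite /upd ekj eqxx; exact: isd_id.
  rewrite /upd (negbTE nkj); exact: isd_cst.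
have hZ : forall x, is_derive (qs j) (1:R)
    (fun t => \sum_(k < n) upd qs j t k * Afun s1 s2 d f p (S (upd qs j t)) x k)
    (\sum_(k < n) (qs k * (a x k * (- s2 * (c k * J k))) + a x k * (k == j)%:R)).
  move=> x.
  have hx : forall k, is_derive (qs j) (1:R)
      (fun t => upd qs j t k * Afun s1 s2 d f p (S (upd qs j t)) x k)
      (qs k * (a x k * (- s2 * (c k * J k))) + a x k * (k == j)%:R).
    move=> k; eapply isd_eq; [exact (isdM (hq k) (hA x k))|].
    by rewrite /= U Sfix.
  exact: isd_sum hx.
have hF : is_derive (qs j) (1:R)
    (fun t => upd qs j t i * \sum_(x < n) p x * Afun s1 s2 d f p (S (upd qs j t)) x i
       / \sum_(k < n) upd qs j t k * Afun s1 s2 d f p (S (upd qs j t)) x k)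
    (qs i * \sum_x (p x * a x i * (- (Z x) ^- 2 *
      \sum_k (qs k * (a x k * (- s2 * (c k * J k))) + a x k * (k == j)%:R))
     + (Z x)^-1 * (p x * (a x i * (- s2 * (c i * J i))) + a x i * 0))
     + (\sum_x p x * a x i / Z x) * (i == j)%:R).
  have hx : forall x, is_derive (qs j) (1:R)
      (fun t => p x * Afun s1 s2 d f p (S (upd qs j t)) x i
       / \sum_(k < n) upd qs j t k * Afun s1 s2 d f p (S (upd qs j t)) x k)
      (p x * a x i * (- (Z x) ^- 2 *
      \sum_k (qs k * (a x k * (- s2 * (c k * J k))) + a x k * (k == j)%:R))
     + (Z x)^-1 * (p x * (a x i * (- s2 * (c i * J i))) + a x i * 0)).
    move=> x.
    have Z0 : (fun t => \sum_(k < n) upd qs j t k * Afun s1 s2 d f p (S (upd qs j t)) x k) (qs j) != 0.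
      by rewrite /= U Sfix; exact: Zne.
    eapply isd_eq; [exact (isdM (isdM (isd_cst (p x) (qs j)) (hA x i)) (isdV Z0 (hZ x)))|].
    by rewrite /= U Sfix.
  eapply isd_eq; [exact (isdM (hq i) (isd_sum hx))|].
  by rewrite /= U Sfix.
have hball : \forall t \near qs j, forall k, `|upd qs j t k - qs k| < e.
  apply/nbhs_ballP; exists e => // t /= Bt k.
  rewrite /upd; case: eqP => [->|_]; last by rewrite subrr normr0.
  by move: Bt; rewrite /ball /= distrC.
have hN : \forall t \near qs j, S (upd qs j t) i =
    upd qs j t i * \sum_(x < n) p x * Afun s1 s2 d f p (S (upd qs j t)) x i
       / \sum_(k < n) upd qs j t k * Afun s1 s2 d f p (S (upd qs j t)) x k.
  by apply: filterS hball => t hb; exact: (He _ hb).2 i.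
have hval : pderiv (S^~ i) qs j = (qs i * \sum_x (p x * a x i * (- (Z x) ^- 2 *
      \sum_k (qs k * (a x k * (- s2 * (c k * J k))) + a x k * (k == j)%:R))
     + (Z x)^-1 * (p x * (a x i * (- s2 * (c i * J i))) + a x i * 0))
     + (\sum_x p x * a x i / Z x) * (i == j)%:R).
  rewrite /pderiv derive1E (near_eq_derive _ hN) -derive1E.
  exact: isd_val hF.
rewrite hval.
exact: (final_alg (p := p) (a := a) (Z := Z) qs c J s2 j Zne fix1).
Qed.
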